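(* Let $k\ge2$, let $G$ be a countably infinite one-way $k$-locally finite graph, and let $H$ be a countable graph with a partition $\{U_1,\dots,U_k\}$ of $V(H)$ into infinite sets such that for every $i\in[k]$ and every finite $W\subseteq U_1\cup\dots\cup U_{i-1}$, the set of vertices in $U_i$ adjacent to every vertex of $W$ is infinite. Then there is an embedding $f$ of $G$ into $H$ (an injective map $V(G)\to V(H)$ sending edges to edges) with $U_1\subseteq f(V(G))$.
   Context: A graph $G$ is one-way $k$-locally finite ($k\ge2$) if there is a partition of $V(G)$ into $k$ independent sets $V_1,\dots,V_k$ with $|V_1|\geq\dots\geq|V_k|$ such that for all $1\le i<j\le k$ and all $v\in V_j$, $v$ has only finitely many neighbors in $V_i$. *)

(* Defs.v *)
From Stdlib Require Import List Arith.

Definition simple_graph (V : Type) (adj : V -> V -> Prop) : Prop :=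
  (forall x y, adj x y -> adj y x) /\ (forall x, ~ adj x x).

Definition finite_set {V : Type} (P : V -> Prop) : Prop :=
  exists l : list V, forall x, P x -> In x l.

Definition infinite_set {V : Type} (P : V -> Prop) : Prop := ~ finite_set P.

Definition countable (V : Type) : Prop :=
  exists g : V -> nat, forall x y, g x = g y -> x = y.

Definition countably_infinite (V : Type) : Prop :=
  exists e : nat -> V,
    (forall m n, e m = e n -> m = n) /\ (forall x, exists n, e n = x).

Definition card_ge {V : Type} (A B : V -> Prop) : Prop :=
  exists f : V -> V,
    (forall x, B x -> A (f x)) /\
    (forall x y, B x -> B y -> f x = f y -> x = y).

(* One-way k-locally finite graph. The partition V_1,...,V_k is encoded by
   a colouring c : V -> nat with c v < k; block V_{i+1} = {v | c v = i}
   (0-indexed). Blocks of a partition are nonempty. *)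
Definition one_way_locally_finite (k : nat) (V : Type) (adj : V -> V -> Prop)
  : Prop :=
  exists c : V -> nat,
    (forall v, c v < k) /\
    (forall i, i < k -> exists v, c v = i) /\
    (forall u v, adj u v -> c u <> c v) /\
    (forall i j, i <= j -> j < k ->
       card_ge (fun v => c v = i) (fun v => c v = j)) /\
    (forall i j v, i < j -> j < k -> c v = j ->
       finite_set (fun u => c u = i /\ adj v u)).

(* Main.v *)
Require Import Defs.
From Stdlib Require Import List Arith.
From Stdlib Require Import Lia Classical ClassicalEpsilon FinFun.
Import ListNotations.

Lemma finite_preimage {A B : Type} (f : A -> B) (l : list B) :
  forall (P : A -> Prop),
  (forall x y, P x -> P y -> f x = f y -> x = y) ->
  (forall x, P x -> In (f x) l) -> exists l' : list A, forall x, P x -> In x l'.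
Proof.
  induction l as [|a l IH]; intros P Hinj Hl.
  - exists nil. intros x Px. destruct (Hl x Px).
  - destruct (classic (exists x, P x /\ f x = a)) as [[x0 [Px0 Hx0]]|Hno].
    + destruct (IH (fun x => P x /\ f x <> a)) as [l' Hl'].
      * intros x y [Px _] [Py _]. apply Hinj; auto.
      * intros x [Px Hxa]. destruct (Hl x Px) as [E|I]; [congruence|exact I].
      * exists (x0 :: l'). intros x Px. destruct (classic (f x = a)) as [E|N].
        -- left. apply Hinj; auto; congruence.
        -- right. apply Hl'. auto.
    + apply IH; auto. intros x Px. destruct (Hl x Px) as [E|I]; auto.
      exfalso. apply Hno. eauto.
Qed.

Lemma finite_union {A : Type} (P : nat -> A -> Prop) n :
  (forall i, i < n -> exists l, forall x, P i x -> In x l) ->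
  exists l, forall i x, i < n -> P i x -> In x l.
Proof.
  induction n as [|n IH]; intros H.
  - exists nil. intros; lia.
  - destruct IH as [l Hl]. { intros i Hi. apply H. lia. }
    destruct (H n (Nat.lt_succ_diag_r n)) as [l' Hl'].
    exists (l ++ l'). intros i x Hi Px. apply in_or_app.
    destruct (Nat.eq_dec i n) as [->|Hne]; [right; auto | left; apply (Hl i); auto; lia].
Qed.

Lemma inf_not_list {V} (e : nat -> V) : (forall m n, e m = e n -> m = n) ->
  forall l : list V, exists x, ~ In x l.
Proof.
  intros He l. apply NNPP. intros Hn.
  assert (Hall: forall x, In x l) by (intros x; apply NNPP; intros Hx; apply Hn; eauto).
  assert (Hnd: NoDup (map e (seq 0 (S (length l))))).
  { apply Injective_map_NoDup. intros a b; apply He. apply seq_NoDup. }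
  pose proof (NoDup_incl_length Hnd (fun x _ => Hall x)) as Hlen.
  rewrite length_map, length_seq in Hlen. lia.
Qed.

Section Emb.
Variables (VG VH : Type) (adjG : VG -> VG -> Prop) (adjH : VH -> VH -> Prop)
  (c : VG -> nat) (U : VH -> nat) (k : nat).
Hypothesis symG : forall x y, adjG x y -> adjG y x.
Hypothesis symH : forall x y, adjH x y -> adjH y x.
Hypothesis hcol : forall u v, adjG u v -> c u <> c v.
Hypothesis hck : forall v, c v < k.
Hypothesis hfin : forall i j v, i < j -> j < k -> c v = j ->
  finite_set (fun u => c u = i /\ adjG v u).
Hypothesis hUext : forall i, i < k ->
     forall W : VH -> Prop, finite_set W -> (forall w, W w -> U w < i) ->
       infinite_set (fun u => U u = i /\ forall w, W w -> adjH w u).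
Hypothesis hG0 : forall l : list VG, exists v, c v = 0 /\ ~ In v l.

Definition dom (s : list (VG*VH)) x := exists y, In (x,y) s.
Definition img (s : list (VG*VH)) y := exists x, In (x,y) s.
Definition inv (s : list (VG*VH)) :=
 (forall x y y', In (x,y) s -> In (x,y') s -> y = y') /\
 (forall x x' y, In (x,y) s -> In (x',y) s -> x = x') /\
 (forall x y, In (x,y) s -> U y = c x) /\
 (forall x y x' y', In (x,y) s -> In (x',y') s -> adjG x x' -> adjH y y') /\
 (forall x z, dom s x -> adjG x z -> c z < c x -> dom s z).

Lemma dom_incl s s' x : incl s s' -> dom s x -> dom s' x.
Proof. intros H [y Hy]. exists y. auto. Qed.
Lemma img_incl s s' x : incl s s' -> img s x -> img s' x.
Proof. intros H [y Hy]. exists y. auto. Qed.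

Lemma add_gen s v y : inv s -> ~ dom s v -> (forall z, adjG v z -> c z < c v -> dom s z) ->
  ~ img s y -> U y = c v -> (forall z w, adjG v z -> c z < c v -> In (z,w) s -> adjH w y) ->
  inv ((v,y)::s).
Proof.
  intros [Hf [Hi [Hc [Ha Hd]]]] Hv Hlow Hy HU Hadj.
  split; [|split; [|split; [|split]]].
  - intros x y1 y2 [E1|I1] [E2|I2].
    + injection E1 as E1a E1b. injection E2 as E2a E2b. congruence.
    + injection E1 as E1a E1b. subst. exfalso; apply Hv; eexists; eauto.
    + injection E2 as E2a E2b. subst. exfalso; apply Hv; eexists; eauto.
    + eauto.
  - intros x x' y0 [E1|I1] [E2|I2].
    + injection E1 as E1a E1b. injection E2 as E2a E2b. congruence.
    + injection E1 as E1a E1b. subst. exfalso; apply Hy; eexists; eauto.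
    + injection E2 as E2a E2b. subst. exfalso; apply Hy; eexists; eauto.
    + eauto.
  - intros x y0 [E|I].
    + injection E as Ea Eb. subst. auto.
    + eauto.
  - intros x y1 x' y2 [E1|I1] [E2|I2] Hxx.
    + injection E1 as E1a E1b. injection E2 as E2a E2b. subst.
      exfalso; exact (hcol _ _ Hxx eq_refl).
    + injection E1 as E1a E1b. subst.
      destruct (lt_eq_lt_dec (c x') (c x)) as [[Hlt|Heq]|Hgt].
      * apply symH. eauto.
      * exfalso; exact (hcol _ _ Hxx (eq_sym Heq)).
      * exfalso. apply Hv. apply (Hd x'); [eexists; eauto|auto|auto].
    + injection E2 as E2a E2b. subst.
      destruct (lt_eq_lt_dec (c x) (c x')) as [[Hlt|Heq]|Hgt].
      * eauto.
      * exfalso; exact (hcol _ _ Hxx Heq).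
      * exfalso. apply Hv. apply (Hd x); [eexists; eauto|auto|auto].
    + eauto.
  - intros x z [y0 [E|I]] Hxz Hlt.
    + injection E as Ea Eb. subst. destruct (Hlow z Hxz Hlt) as [w Hw].
      exists w. right; auto.
    + destruct (Hd x z (ex_intro _ y0 I) Hxz Hlt) as [w Hw]. exists w; right; auto.
Qed.

Lemma add_lower s v : inv s -> ~ dom s v -> (forall z, adjG v z -> c z < c v -> dom s z) ->
  exists y, inv ((v,y)::s).
Proof.
  intros Hs Hv Hlow.
  pose proof Hs as [Hf [Hi [Hc [Ha Hd]]]].
  pose (W := fun w => exists z, adjG v z /\ c z < c v /\ In (z,w) s).
  assert (HW : finite_set W).
  { exists (map snd s). intros w [z [_ [_ I]]]. exact (in_map snd _ _ I). }
  assert (HWb : forall w, W w -> U w < c v).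
  { intros w [z [_ [Hlt I]]]. rewrite (Hc _ _ I). auto. }
  pose proof (hUext (c v) (hck v) W HW HWb) as Hinf.
  destruct (classic (exists y, (U y = c v /\ forall w, W w -> adjH w y) /\ ~ In y (map snd s)))
    as [[y [[HUy HWy] Hny]]|Hno].
  - exists y. apply add_gen; auto.
    + intros [x I]. apply Hny. exact (in_map snd _ _ I).
    + intros z w Hz Hlt I. apply HWy. exists z; auto.
  - exfalso. apply Hinf. exists (map snd s). intros y Hy. apply NNPP. intros Hn.
    apply Hno. eauto.
Qed.

Lemma add_zero s u : inv s -> U u = 0 -> ~ img s u -> exists v, inv ((v,u)::s).
Proof.
  intros Hs HU Hu. destruct (hG0 (map fst s)) as [v [Hv0 Hv]].
  exists v. apply add_gen; auto.
  - intros [y I]. apply Hv. exact (in_map fst _ _ I).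
  - intros z _ Hlt. lia.
  - congruence.
  - intros z w _ Hlt. lia.
Qed.

Lemma reach n : forall v, c v < n -> forall s, inv s -> exists s', inv s' /\ incl s s' /\ dom s' v.
Proof.
  induction n as [|n IH]; intros v Hv s Hs; [lia|].
  assert (Hl: forall l s, inv s -> exists s', inv s' /\ incl s s' /\
             forall z, In z l -> c z < n -> dom s' z).
  { induction l as [|a l IHl]; intros s0 Hs0.
    - exists s0. split; [auto|split; [apply incl_refl|intros z []]].
    - destruct (IHl s0 Hs0) as [s1 [Hs1 [Hi1 Hd1]]].
      destruct (classic (c a < n)) as [Ha|Ha].
      + destruct (IH a Ha s1 Hs1) as [s2 [Hs2 [Hi2 Hd2]]].
        exists s2. split; [auto|split; [eapply incl_tran; eauto|]].
        intros z [<-|Iz] Hz; auto. eapply dom_incl; eauto.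
      + exists s1. split; [auto|split; [auto|]].
        intros z [<-|Iz] Hz; [lia|auto]. }
  destruct (finite_union (fun i u => c u = i /\ adjG v u) (c v)) as [L HL].
  { intros i Hi. exact (hfin i (c v) v Hi (hck v) eq_refl). }
  destruct (Hl L s Hs) as [s1 [Hs1 [Hi1 Hd1]]].
  assert (Hlow : forall z, adjG v z -> c z < c v -> dom s1 z).
  { intros z Hz Hlt. apply Hd1; [|lia]. apply (HL (c z)); auto. }
  destruct (classic (dom s1 v)) as [Hv1|Hv1].
  - exists s1. auto.
  - destruct (add_lower s1 v Hs1 Hv1 Hlow) as [y Hy].
    exists ((v,y)::s1). split; [auto|split].
    + apply incl_tl. auto.
    + exists y. left; auto.
Qed.

Lemma stepC_ex s v : exists s', inv s -> inv s' /\ incl s s' /\ dom s' v.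
Proof.
  destruct (classic (inv s)) as [H|H].
  - destruct (reach (S (c v)) v (Nat.lt_succ_diag_r _) s H) as [s' Hs']. exists s'; auto.
  - exists s. intro; contradiction.
Qed.

Lemma stepD_ex (g : VH -> nat) (ginj : forall x y, g x = g y -> x = y) s n :
  exists s', inv s -> inv s' /\ incl s s' /\ forall u, g u = n -> U u = 0 -> img s' u.
Proof.
  destruct (classic (inv s)) as [H|H]; [|exists s; intro; contradiction].
  destruct (classic (exists u, g u = n /\ U u = 0 /\ ~ img s u)) as [[u [Hg [HU Hu]]]|Hno].
  - destruct (add_zero s u H HU Hu) as [v Hv].
    exists ((v,u)::s). intros _. split; [auto|split; [apply incl_tl, incl_refl|]].
    intros u' Hg' HU'. assert (u' = u) by (apply ginj; congruence). subst.
    exists v; left; auto.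
  - exists s. intros _. split; [auto|split; [apply incl_refl|]].
    intros u Hg HU. apply NNPP. intros Hn. apply Hno. eauto.
Qed.

End Emb.


Theorem mainTheorem19 (k : nat) (hk : 2 <= k)
  (VG : Type) (adjG : VG -> VG -> Prop)
  (VH : Type) (adjH : VH -> VH -> Prop)
  (hG : simple_graph VG adjG) (hGc : countably_infinite VG)
  (hGk : one_way_locally_finite k VG adjG)
  (hH : simple_graph VH adjH) (hHc : countable VH)
  (U : VH -> nat)
  (hU : forall u, U u < k)
  (hUinf : forall i, i < k -> infinite_set (fun u => U u = i))
  (hUext : forall i, i < k ->
     forall W : VH -> Prop, finite_set W -> (forall w, W w -> U w < i) ->
       infinite_set (fun u => U u = i /\ forall w, W w -> adjH w u)) :
  exists f : VG -> VH,
    (forall x y, f x = f y -> x = y) /\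
    (forall x y, adjG x y -> adjH (f x) (f y)) /\
    (forall u, U u = 0 -> exists x, f x = u).
Proof.
  destruct hGk as [c [hck [hne [hcol [hcard hfin]]]]].
  destruct hG as [symG _]. destruct hH as [symH _].
  destruct hGc as [e [einj esurj]]. destruct hHc as [g ginj].
  assert (hG0 : forall l : list VG, exists v, c v = 0 /\ ~ In v l).
  { intros l. apply NNPP. intros Hn.
    assert (H0 : forall v, c v = 0 -> In v l).
    { intros v Hv. apply NNPP. intros Hv'. apply Hn. eauto. }
    destruct (finite_union (fun j v => c v = j) k) as [L HL].
    { intros j Hj. destruct (hcard 0 j (Nat.le_0_l j) Hj) as [f [Hf1 Hf2]].
      apply (finite_preimage f l (fun v => c v = j) Hf2).
      intros x Px. apply H0. apply Hf1. exact Px. }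
    destruct (inf_not_list e einj L) as [x Hx]. apply Hx.
    apply (HL (c x)); auto. }
  pose (FC := fun s v => proj1_sig (constructive_indefinite_description _
         (stepC_ex VG VH adjG adjH c U k symG symH hcol hck hfin hUext s v))).
  pose (FD := fun s n => proj1_sig (constructive_indefinite_description _
         (stepD_ex VG VH adjG adjH c U symG symH hcol hG0 g ginj s n))).
  assert (HFC : forall s v, inv VG VH adjG adjH c U s ->
     inv VG VH adjG adjH c U (FC s v) /\ incl s (FC s v) /\ dom VG VH (FC s v) v).
  { intros s v. exact (proj2_sig (constructive_indefinite_description _
         (stepC_ex VG VH adjG adjH c U k symG symH hcol hck hfin hUext s v))). }
  assert (HFD : forall s n, inv VG VH adjG adjH c U s ->
     inv VG VH adjG adjH c U (FD s n) /\ incl s (FD s n) /\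
     forall u, g u = n -> U u = 0 -> img VG VH (FD s n) u).
  { intros s n. exact (proj2_sig (constructive_indefinite_description _
         (stepD_ex VG VH adjG adjH c U symG symH hcol hG0 g ginj s n))). }
  pose (sq := fix sq n := match n with 0 => nil | S m => FD (FC (sq m) (e m)) m end).
  assert (Hsq : forall n, sq (S n) = FD (FC (sq n) (e n)) n) by reflexivity.
  assert (Hinv : forall n, inv VG VH adjG adjH c U (sq n)).
  { induction n as [|n IH].
    - simpl. unfold inv. repeat split; try (intros; contradiction).
      intros x z [y []].
    - rewrite Hsq. apply HFD. apply HFC. auto. }
  assert (Hincl1 : forall n, incl (sq n) (sq (S n))).
  { intros n. rewrite Hsq. eapply incl_tran; [apply HFC, Hinv|apply HFD, HFC, Hinv]. }
  assert (Hmono : forall n m, n <= m -> incl (sq n) (sq m)).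
  { intros n m Hle. induction Hle; [apply incl_refl|eapply incl_tran; eauto]. }
  assert (Hdom : forall n, dom VG VH (sq (S n)) (e n)).
  { intros n. rewrite Hsq. eapply dom_incl; [apply HFD, HFC, Hinv|apply HFC, Hinv]. }
  assert (Himg : forall u, U u = 0 -> img VG VH (sq (S (g u))) u).
  { intros u Hu. rewrite Hsq. apply HFD; auto. apply HFC, Hinv. }
  assert (Hex : forall x, exists y, exists N, In (x,y) (sq N)).
  { intros x. destruct (esurj x) as [n <-]. destruct (Hdom n) as [y Hy]. eauto. }
  pose (f := fun x => proj1_sig (constructive_indefinite_description _ (Hex x))).
  assert (Hf : forall x, exists N, In (x, f x) (sq N)).
  { intros x. exact (proj2_sig (constructive_indefinite_description _ (Hex x))). }
  exists f. split; [|split].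
  - intros x y Hxy. destruct (Hf x) as [N1 H1]. destruct (Hf y) as [N2 H2].
    destruct (Hinv (max N1 N2)) as [_ [Hi _]].
    apply (Hi x y (f x)).
    + apply (Hmono N1); [lia|auto].
    + rewrite Hxy. apply (Hmono N2); [lia|auto].
  - intros x y Hxy. destruct (Hf x) as [N1 H1]. destruct (Hf y) as [N2 H2].
    destruct (Hinv (max N1 N2)) as [_ [_ [_ [Ha _]]]].
    apply (Ha x (f x) y (f y)); auto.
    + apply (Hmono N1); [lia|auto].
    + apply (Hmono N2); [lia|auto].
  - intros u Hu. destruct (Himg u Hu) as [x Hx]. exists x.
    destruct (Hf x) as [N1 H1].
    destruct (Hinv (max N1 (S (g u)))) as [Hfn _].
    apply (Hfn x).
    + apply (Hmono N1); [lia|auto].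
    + apply (Hmono (S (g u))); [lia|auto].
Qed.
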